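(* Let $N,d\in\mathbb{N}^*$, $\alpha>0$, and for $i\neq j$ let $\Psi_{ij}:\mathbb{R}^{2dN}\to\mathbb{R}_+$ be non-negative, bounded and locally Lipschitz. Let $(x_i(t),v_i(t))_{i\in\{1,\dots,N\},t\ge0}$ be a solution on $\mathbb{R}_+$ of $$\frac{dx_i}{dt}=v_i,\qquad \frac{dv_i}{dt}=\alpha\sum_{j=1}^NQ_t(i,j)(v_j-v_i),$$ where $Q_t(i,j)=\Psi_{ij}((x_1(t),v_1(t)),\dots,(x_N(t),v_N(t)))$ for $i\ne j$ and $Q_t(i,i)=-\sum_{j\ne i}Q_t(i,j)$. Let $(P^*_{s,t})_{0\le s\le t}$ be the solution on $\mathbb{R}_+$ of $$P^*_{t,t}=I,\qquad \partial_tP^*_{s,t}=\alpha Q_tP^*_{s,t},\qquad \partial_sP^*_{s,t}=-\alpha P^*_{s,t}Q_s,$$ and define the Dobrushin ergodicity coefficient $\mu(P^*_{s,t})=\inf_{i,j}\sum_{k=1}^N P^*_{s,t}(i,k)\wedge P^*_{s,t}(j,k)$. Then for all $0\le s\le t$, $$V(t)\le\big(1-\mu(P^*_{s,t})\big)V(s),$$ where $V(t)=\sup_{i,j}\|v_i(t)-v_j(t)\|_2$.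
   Context: $a\wedge b=\min(a,b)$; $\|\cdot\|_2$ is the Euclidean norm; $I$ is the $N\times N$ identity matrix. The matrices $P^*_{s,t}$ are stochastic matrices. *)

(* Defs.v *)
From mathcomp Require Import all_boot all_order all_algebra.
From mathcomp Require Import all_classical all_reals all_analysis.
Set Implicit Arguments. Unset Strict Implicit. Unset Printing Implicit Defensive.
Import Order.TTheory GRing.Theory Num.Theory.
Import numFieldNormedType.Exports.
Local Open Scope ring_scope.
Local Open Scope classical_set_scope.

(* A configuration of N particles in R^d: positions and velocities,
   i.e. a point of R^{2dN}. *)
Definition config (R : realType) (N d : nat) :=
  (('I_N -> 'I_d -> R) * ('I_N -> 'I_d -> R))%type.

(* max-norm distance on R^{2dN} (all norms are equivalent in finite dim) *)
Definition cdist (R : realType) (N d : nat) (z1 z2 : config R N d) : R :=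
  \big[Num.max/0]_(i < N) \big[Num.max/0]_(k < d)
     Num.max `|z1.1 i k - z2.1 i k| `|z1.2 i k - z2.2 i k|.

Definition locally_lipschitz (R : realType) (N d : nat) (f : config R N d -> R) :=
  forall z, exists r : R, exists L : R, 0 < r /\
    forall z1 z2, cdist z z1 < r -> cdist z z2 < r ->
      `|f z1 - f z2| <= L * cdist z1 z2.

Definition sup_bounded (R : realType) (N d : nat) (f : config R N d -> R) :=
  exists M : R, forall z, `|f z| <= M.

Definition Qmat (R : realType) (N d : nat)
  (Psi : 'I_N -> 'I_N -> config R N d -> R) (z : config R N d) : 'M[R]_N :=
  \matrix_(i, j) (if i != j then Psi i j z
                  else - \sum_(l < N | l != i) Psi i l z).

Definition dobrushin (R : realType) (N : nat) (P : 'M[R]_N) : R :=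
  inf [set (\sum_(k < N) Num.min (P i k) (P j k)) | i in [set: 'I_N] & j in [set: 'I_N]].

Definition norm2 (R : realType) (d : nat) (u : 'I_d -> R) : R :=
  Num.sqrt (\sum_(k < d) u k ^+ 2).

Definition velocity_diameter (R : realType) (N d : nat) (v : 'I_N -> 'I_d -> R) : R :=
  sup [set norm2 (fun k => v i k - v j k) | i in [set: 'I_N] & j in [set: 'I_N]].

(* Main.v *)
Require Import Defs.
From mathcomp Require Import all_boot all_order all_algebra.
From mathcomp Require Import all_classical all_reals all_analysis.
From mathcomp Require Import ring lra.
Import Order.TTheory GRing.Theory Num.Theory.
Import numFieldNormedType.Exports.
Local Open Scope ring_scope.
Local Open Scope classical_set_scope.

Section N2.
Variables (R : realType) (d : nat).
Implicit Types u w : 'I_d -> R.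

Lemma norm2_ge0 u : 0 <= norm2 u.
Proof. exact: sqrtr_ge0. Qed.

Lemma sumsq_ge0 u : 0 <= \sum_(k < d) u k ^+ 2.
Proof. by apply: sumr_ge0 => k _; exact: sqr_ge0. Qed.

Lemma cs_sq u w :
  (\sum_(k < d) u k * w k) ^+ 2 <=
  (\sum_(k < d) u k ^+ 2) * (\sum_(k < d) w k ^+ 2).
Proof.
set A := \sum_(k < d) u k ^+ 2; set B := \sum_(k < d) w k ^+ 2.
set C := \sum_(k < d) u k * w k.
have E l : \sum_(k < d) (u k - l * w k) ^+ 2 = A - l * (2 * C) + l ^+ 2 * B.
  rewrite /A /B /C !mulr_sumr -sumrB -big_split /=.
  by apply: eq_bigr => k _; ring.
have B0 : 0 <= B by exact: sumsq_ge0.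
have [Bz|Bp] := eqVneq B 0.
  have w0 k : w k = 0.
    have H := psumr_eq0P (fun i _ => sqr_ge0 (w i)) Bz.
    by apply/eqP; rewrite -sqrf_eq0; apply/eqP; apply: H.
  have -> : C = 0 by rewrite /C big1 // => k _; rewrite w0 mulr0.
  by rewrite Bz mulr0 expr0n.
have Bpos : 0 < B by rewrite lt_def Bp B0.
have := sumsq_ge0 (fun k => u k - (C / B) * w k).
rewrite E => H.
have H2 : 0 <= A * B - C ^+ 2.
  have -> : A * B - C ^+ 2 = (A - C / B * (2 * C) + (C / B) ^+ 2 * B) * B.
    by field; rewrite Bp.
  by apply: mulr_ge0.
by rewrite -subr_ge0.
Qed.

Lemma cs u w :
  \sum_(k < d) u k * w k <= norm2 u * norm2 w.
Proof.
rewrite /norm2 -sqrtrM ?sumsq_ge0 //.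
apply: le_trans (ler_norm _) _.
rewrite -sqrtr_sqr; apply: ler_wsqrtr.
exact: cs_sq.
Qed.

Lemma norm2_tri u w : norm2 (fun k => u k + w k) <= norm2 u + norm2 w.
Proof.
rewrite {1}/norm2 -(@ger0_norm _ (norm2 u + norm2 w)); last by rewrite addr_ge0 ?norm2_ge0.
rewrite -sqrtr_sqr; apply: ler_wsqrtr.
have -> : \sum_(k < d) (u k + w k) ^+ 2 =
   \sum_(k < d) u k ^+ 2 + 2 * \sum_(k < d) u k * w k + \sum_(k < d) w k ^+ 2.
  rewrite mulr_sumr -!big_split /=; apply: eq_bigr => k _; ring.
have -> : (norm2 u + norm2 w) ^+ 2 = norm2 u ^+ 2 + 2 * (norm2 u * norm2 w) + norm2 w ^+ 2 by ring.
rewrite /norm2 !sqr_sqrtr ?sumsq_ge0 //.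
rewrite lerD2r lerD2l ler_pM2l //; exact: cs.
Qed.

Lemma norm2_scale (r : R) u : 0 <= r -> norm2 (fun k => r * u k) = r * norm2 u.
Proof.
move=> r0; rewrite /norm2.
have -> : \sum_(k < d) (r * u k) ^+ 2 = r ^+ 2 * \sum_(k < d) u k ^+ 2.
  by rewrite mulr_sumr; apply: eq_bigr => k _; rewrite exprMn.
by rewrite sqrtrM ?sqr_ge0 // sqrtr_sqr ger0_norm.
Qed.

Lemma norm2_0 : norm2 (fun _ : 'I_d => 0 : R) = 0.
Proof. by rewrite /norm2 big1 ?sqrtr0 // => k _; rewrite expr0n. Qed.

Lemma norm2_sum (I : Type) (r : seq I) (F : I -> 'I_d -> R) :
  norm2 (fun k => \sum_(m <- r) F m k) <= \sum_(m <- r) norm2 (F m).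
Proof.
elim: r => [|a r IH].
  rewrite big_nil; under eq_fun do rewrite big_nil; by rewrite norm2_0.
rewrite big_cons; under eq_fun do rewrite big_cons.
apply: le_trans (norm2_tri _ _) _; exact: lerD.
Qed.

End N2.

Lemma Qrow (R : realType) N d (Psi : 'I_N -> 'I_N -> config R N d -> R) z i :
  \sum_(j < N) Qmat Psi z i j = 0.
Proof.
rewrite (bigD1 i) //= mxE eqxx /=.
rewrite addrC; apply/eqP; rewrite subr_eq0; apply/eqP; apply: eq_bigr => j ji.
by rewrite mxE eq_sym ji.
Qed.

Section Transport.
Variables (R : realType) (N : nat) (alpha : R) (Q : R -> 'M[R]_N)
  (P : R -> R -> 'M[R]_N) (w : R -> 'I_N -> R).
Hypothesis Qrow0 : forall u i, \sum_(j < N) Q u i j = 0.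

Lemma Q_act u k : \sum_(j < N) Q u k j * (w u j - w u k) = \sum_(j < N) Q u k j * w u j.
Proof.
under eq_bigr do rewrite mulrBr.
by rewrite sumrB -mulr_suml Qrow0 mul0r subr0.
Qed.

Lemma transport (s t : R) :
  0 <= s -> s <= t ->
  P t t = 1%:M ->
  (forall i j, {within `[0, t], continuous (fun u => P u t i j)}) ->
  (forall u : R, 0 < u -> u < t -> forall i j,
     is_derive u 1 (fun y => P y t i j) (- alpha * (P u t *m Q u) i j)) ->
  (forall k, {within `[0, +oo[, continuous (fun u => w u k)}) ->
  (forall u : R, 0 < u -> forall k,
     is_derive u 1 (fun y => w y k) (alpha * \sum_(j < N) Q u k j * (w u j - w u k))) ->
  forall i, w t i = \sum_(k < N) P s t i k * w s k.
Proof.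
move=> s0 st Ptt cP dP cw dw i.
set g := fun u => \sum_(k < N) P u t i k * w u k.
have gt : g t = w t i.
  rewrite /g Ptt (bigD1 i) //= big1 => [|k ki].
    by rewrite mxE eqxx mulr1n mul1r addr0.
  by rewrite mxE eq_sym (negbTE ki) mulr0n mul0r.
rewrite -gt -/(g s); apply/eqP; rewrite -subr_eq0; apply/eqP.
have H1 : forall x, x \in `]s, t[%R -> is_derive x 1 g 0.
  move=> u; rewrite in_itv /=; move=> /andP[su ut].
  have u0 : 0 < u by apply: le_lt_trans s0 su.
  have Hk k : is_derive u 1 (fun y => P y t i k * w y k)
      (P u t i k * (alpha * \sum_(j < N) Q u k j * (w u j - w u k))
       + w u k * (- alpha * (P u t *m Q u) i k)).
    have := is_deriveM (dP u u0 ut i k) (dw u u0 k).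
    have -> : ((fun y => P y t i k) * w^~ k) = (fun y => P y t i k * w y k) by [].
    exact.
  have -> : g = \sum_(k < N) (fun y => P y t i k * w y k) by rewrite fct_sumE /g.
  have HS := is_derive_sum (h := fun k y => P y t i k * w y k) Hk. apply: (is_derive_eq HS).
  rewrite big_split /=.
  under eq_bigr do rewrite Q_act !mulr_sumr.
  under [X in _ + X]eq_bigr do rewrite mxE !mulr_sumr.
  rewrite [X in _ + X]exchange_big /= -big_split /=.
  apply: big1 => k _; rewrite -big_split; apply: big1 => j _ /=; ring.
have H2 : {within `[s, t], continuous g}.
  have cP' k : {within `[s, t], continuous (fun u => P u t i k)}.
    apply: continuous_subspaceW (cP i k) => y /=; rewrite !in_itv /= => /andP[h1 h2].
    by rewrite h2 (le_trans s0 h1).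
  have cw' k : {within `[s, t], continuous (fun u => w u k)}.
    apply: continuous_subspaceW (cw k) => y /=; rewrite !in_itv /= => /andP[h1 h2].
    by rewrite (le_trans s0 h1).
  move=> y; rewrite /g.
  apply: (cvg_big (op:=+%R) (x0:=0) (P:=xpredT) add_continuous (Ff := fun k u => P u t i k * w u k)).
    exact: nbhs_subspace_filter.
  move=> k _; apply: cvgM; [exact: nbhs_subspace_filter|exact: cP'|exact: cw'].
have [c _ ->] := MVT_segment st H1 H2.
by rewrite mul0r.
Qed.
End Transport.

Lemma key (R : realType) (N d : nat) (M : 'M[R]_N) (a b : 'I_N -> 'I_d -> R) (Va : R) i j :
  (forall i, \sum_(k < N) M i k = 1) ->
  (forall i c, b i c = \sum_(k < N) M i k * a k c) ->
  (forall k l, norm2 (fun c => a k c - a l c) <= Va) ->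
  norm2 (fun c => b i c - b j c) <= (1 - \sum_(k < N) Num.min (M i k) (M j k)) * Va.
Proof.
move=> rows hb hV.
set m := fun k => Num.min (M i k) (M j k).
set p := fun k => M i k - m k.
set q := fun k => M j k - m k.
have p0 k : 0 <= p k by rewrite subr_ge0 /m ge_min lexx.
have q0 k : 0 <= q k by rewrite subr_ge0 /m ge_min lexx orbT.
set th := 1 - \sum_(k < N) m k.
have Sp : \sum_(k < N) p k = th by rewrite /p sumrB rows.
have Sq : \sum_(k < N) q k = th by rewrite /q sumrB rows.
have th0 : 0 <= th by rewrite -Sp sumr_ge0.
have hd c : b i c - b j c = \sum_(k < N) p k * a k c - \sum_(k < N) q k * a k c.
  rewrite !hb -!sumrB; apply: eq_bigr => k _; rewrite /p /q; ring.
have [thz|thp] := eqVneq th 0.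
  have pz k : p k = 0 by apply: (psumr_eq0P (fun k _ => p0 k) (etrans Sp thz)).
  have qz k : q k = 0 by apply: (psumr_eq0P (fun k _ => q0 k) (etrans Sq thz)).
  under eq_fun do rewrite hd.
  under eq_fun do (rewrite big1 => [|k _]; last by rewrite pz mul0r).
  under eq_fun do (rewrite big1 => [|k _]; last by rewrite qz mul0r).
  by rewrite subrr norm2_0 thz mul0r.
have thpos : 0 < th by rewrite lt_def thp th0.
have Hid c : th * (b i c - b j c) =
    \sum_(k < N) \sum_(l < N) (p k * q l) * (a k c - a l c).
  have -> : \sum_(k < N) \sum_(l < N) (p k * q l) * (a k c - a l c) =
     \sum_(k < N) \sum_(l < N) (p k * a k c) * q l -
     \sum_(l < N) \sum_(k < N) (q l * a l c) * p k.
    rewrite [X in _ - X]exchange_big /= -sumrB; apply: eq_bigr => k _.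
    rewrite -sumrB; apply: eq_bigr => l _; ring.
  have E1 : \sum_(k < N) \sum_(l < N) (p k * a k c) * q l = th * \sum_(k < N) p k * a k c.
    by rewrite mulr_sumr; apply: eq_bigr => k _; rewrite -mulr_sumr Sq mulrC.
  have E2 : \sum_(l < N) \sum_(k < N) (q l * a l c) * p k = th * \sum_(l < N) q l * a l c.
    by rewrite mulr_sumr; apply: eq_bigr => k _; rewrite -mulr_sumr Sp mulrC.
  by rewrite E1 E2 hd mulrBr.
rewrite -(ler_pM2l thpos) -norm2_scale //.
under eq_fun do rewrite Hid.
apply: (le_trans (norm2_sum _ _ _ _ (fun k c => \sum_(l < N) (p k * q l) * (a k c - a l c)))).
apply: le_trans.
  apply: ler_sum => k _; exact: (norm2_sum _ _ _ _ (fun l c => (p k * q l) * (a k c - a l c))).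
have -> : th * (th * Va) = \sum_(k < N) \sum_(l < N) (p k * q l) * Va.
  rewrite -{1}Sp mulr_suml; apply: eq_bigr => k _.
  by rewrite -Sq mulr_suml mulr_sumr; apply: eq_bigr => l _; ring.
apply: ler_sum => k _; apply: ler_sum => l _.
rewrite norm2_scale ?mulr_ge0 //; apply: ler_wpM2l; [exact: mulr_ge0 | exact: hV].
Qed.

Lemma le_sum2 (R : realType) N (f : 'I_N -> 'I_N -> R) i j :
  (forall i j, 0 <= f i j) -> f i j <= \sum_(i0 < N) \sum_(j0 < N) f i0 j0.
Proof.
move=> f0; rewrite (bigD1 i) //= (bigD1 j) //= -addrA lerDl.
by rewrite addr_ge0 // sumr_ge0 // => k _; rewrite sumr_ge0.
Qed.

Theorem corollary2p8 (R : realType) (N d : nat) (alpha : R)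
  (Psi : 'I_N -> 'I_N -> config R N d -> R)
  (x v : R -> 'I_N -> 'I_d -> R)
  (P : R -> R -> 'M[R]_N) :
  (0 < N)%N -> (0 < d)%N -> 0 < alpha ->
  (* Psi_ij non-negative, bounded, locally Lipschitz for i <> j *)
  (forall i j, i != j -> forall z, 0 <= Psi i j z) ->
  (forall i j, i != j -> sup_bounded (Psi i j)) ->
  (forall i j, i != j -> locally_lipschitz (Psi i j)) ->
  (* (x, v) is a solution on R_+ of the ODE system *)
  (forall i k, {within `[0, +oo[, continuous (fun t => x t i k)}) ->
  (forall i k, {within `[0, +oo[, continuous (fun t => v t i k)}) ->
  (forall t : R, 0 < t -> forall i k,
     is_derive t 1 (fun s => x s i k) (v t i k)) ->
  (forall t : R, 0 < t -> forall i k,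
     is_derive t 1 (fun s => v s i k)
       (alpha * \sum_(j < N) (Qmat Psi (x t, v t)) i j * (v t j k - v t i k))) ->
  (* P* is the solution of the forward/backward Kolmogorov equations *)
  (forall t : R, 0 <= t -> P t t = 1%:M) ->
  (forall s : R, 0 <= s -> forall i j,
     {within `[s, +oo[, continuous (fun t => P s t i j)}) ->
  (forall s t : R, 0 <= s -> s < t -> forall i j,
     is_derive t 1 (fun u => P s u i j)
       (alpha * ((Qmat Psi (x t, v t)) *m P s t) i j)) ->
  (forall t : R, 0 <= t -> forall i j,
     {within `[0, t], continuous (fun s => P s t i j)}) ->
  (forall s t : R, 0 < s -> s < t -> forall i j,
     is_derive s 1 (fun u => P u t i j)
       (- alpha * (P s t *m Qmat Psi (x s, v s)) i j)) ->
  forall s t : R, 0 <= s -> s <= t ->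
    velocity_diameter (v t) <= (1 - dobrushin (P s t)) * velocity_diameter (v s).
Proof.
move=> N0 _ _ _ _ _ _ cv _ dv Ptt _ _ cPb dPb s t s0 st.
have t0 : 0 <= t by exact: le_trans s0 st.
pose Q := fun u => Qmat Psi (x u, v u).
have Qr : forall u i, \sum_(j < N) Q u i j = 0 by move=> u i; exact: Qrow.
have dPb' : forall u : R, 0 < u -> u < t -> forall i j,
     is_derive u 1 (fun y => P y t i j) (- alpha * (P u t *m Q u) i j).
  by move=> u h1 h2; exact: dPb.
have hb : forall i c, v t i c = \sum_(k < N) P s t i k * v s k c.
  move=> i c.
  exact: (@transport R N alpha Q P (fun u k => v u k c) Qr s t s0 st (Ptt t t0) (cPb t t0) dPb'
     (fun k => cv k c) (fun u hu k => dv u hu k c) i).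
have rows : forall i, \sum_(k < N) P s t i k = 1.
  move=> i.
  have hc : 'I_N -> {within `[0, +oo[, continuous (fun _ : R => (1:R))}.
    by move=> k; apply: continuous_subspaceT => y; exact: cst_continuous.
  have hd : forall u : R, 0 < u -> forall k : 'I_N,
      is_derive u 1 (fun _ : R => (1:R)) (alpha * \sum_(j < N) Q u k j * (1 - 1)).
    move=> u _ k.
    have -> : alpha * \sum_(j < N) Q u k j * (1 - 1) = 0.
      by rewrite big1 ?mulr0 // => j _; rewrite subrr mulr0.
    exact: is_derive_cst.
  have H1 := (@transport R N alpha Q P (fun _ _ => 1) Qr s t s0 st (Ptt t t0) (cPb t t0) dPb' hc hd i).
  rewrite [RHS]H1; apply: eq_bigr => k _; by rewrite mulr1.
set a := v s; set b := v t; set M := P s t.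
set Va := velocity_diameter a.
pose i0 := Ordinal N0.
have hubA : has_ubound [set norm2 (fun k => a i k - a j k) | i in [set: 'I_N] & j in [set: 'I_N]].
  exists (\sum_(i < N) \sum_(j < N) norm2 (fun k => a i k - a j k)).
  move=> z [i _ [j _ <-]].
  by apply: (@le_sum2 R N (fun i j => norm2 (fun k => a i k - a j k))) => ? ?; exact: norm2_ge0.
have hV : forall k l, norm2 (fun c => a k c - a l c) <= Va.
  move=> k l; apply: ub_le_sup => //; by exists k => //; exists l.
have Va0 : 0 <= Va by apply: le_trans (hV i0 i0); exact: norm2_ge0.
have hmu : forall i j, dobrushin M <= \sum_(k < N) Num.min (M i k) (M j k).
  move=> i j; apply: ge_inf; last by exists i => //; exists j.
  exists (- \sum_(i < N) \sum_(j < N) `|\sum_(k < N) Num.min (M i k) (M j k)|).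
  move=> z [i' _ [j' _ <-]].
  rewrite lerNl; apply: (le_trans (y := `|\sum_(k < N) Num.min (M i' k) (M j' k)|)).
    by rewrite -normrN ler_norm.
  exact: (@le_sum2 R N (fun i j => `|\sum_(k < N) Num.min (M i k) (M j k)|) i' j' (fun _ _ => normr_ge0 _)).
apply: ge_sup; first by exists (norm2 (fun k => b i0 k - b i0 k)); exists i0 => //; exists i0.
move=> z [i _ [j _ <-]].
apply: le_trans (@key R N d M a b Va i j rows hb hV) _.
apply: ler_wpM2r => //; rewrite lerD2l lerN2; exact: hmu.
Qed.
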